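(* Let $\nu>0$. For every $x>0$, $$\lim_{t\to\infty} t^{\nu}\,E^{(\nu)}_x\Big[\Big(\frac{1}{R_t}\Big)^{2\nu}\Big]=\frac{1}{2^{\nu}\Gamma(\nu+1)}.$$
   Context: For $\mu\in\mathbb{R}$ and $x>0$, $P^{(\mu)}_x$ denotes the law on $\Omega=C([0,\infty);\mathbb{R})$ of the Bessel process with index $\mu$ (dimension $2(\mu+1)$) started at $x$, and $E^{(\mu)}_x$ the corresponding expectation; $R$ is the coordinate process on $\Omega$. $\Gamma$ is the gamma function. *)

(* Defs.v *)
From HB Require Import structures.
From mathcomp Require Import all_boot all_order all_algebra.
From mathcomp Require Import all_classical all_reals all_analysis.
Set Implicit Arguments. Unset Strict Implicit. Unset Printing Implicit Defensive.
Import Order.TTheory GRing.Theory Num.Theory.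
Import numFieldNormedType.Exports.
Local Open Scope classical_set_scope.
Local Open Scope ring_scope.

Section Bessel.
Variable R : realType.

Definition Gamma (s : R) : R :=
  fine (\int[@lebesgue_measure R]_(u in `]0%R, +oo[)
          ((u `^ (s - 1)) * expR (- u))%:E)%E.

Definition besselI (nu z : R) : R :=
  limn (series (fun k : nat =>
     (z / 2) `^ (2 * k%:R + nu) / ((k`!)%:R * Gamma (k%:R + nu + 1)))).

(* Transition density (w.r.t. Lebesgue measure on ]0,+oo[) of the Bessel
   process of index nu >= 0 started at x > 0, at time t > 0
   (Revuz-Yor, Ch. XI, (1.6)):
   p_t(x,y) = (y/t) (y/x)^nu exp(-(x^2+y^2)/(2t)) I_nu(x y / t). *)
Definition bessel_density (nu x t y : R) : R :=
  (y / t) * (y / x) `^ nu * expR (- (x ^+ 2 + y ^+ 2) / (2 * t))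
  * besselI nu (x * y / t).

(* E^(nu)_x [ f(R_t) ] for a nonnegative measurable f, computed from the
   law of R_t under P^(nu)_x (extended-real valued). *)
Definition bessel_expect (nu x t : R) (f : R -> R) : \bar R :=
  (\int[@lebesgue_measure R]_(y in `]0%R, +oo[)
      (f y * bessel_density nu x t y)%:E)%E.

End Bessel.

(* Main.v *)
Require Import Defs.
From HB Require Import structures.
From mathcomp Require Import all_boot all_order all_algebra.
From mathcomp Require Import all_classical all_reals all_analysis.
From mathcomp Require Import measurable_realfun.
From mathcomp.algebra_tactics Require Import ring lra.
Import Order.TTheory GRing.Theory Num.Theory.
Import numFieldNormedType.Exports.
Local Open Scope classical_set_scope.
Local Open Scope ring_scope.

Section H.
Variable R : realType.
Notation mu := (@lebesgue_measure R).

Lemma le_int_nm (D : set R) (f g : R -> \bar R) :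
  (forall y, D y -> (0 <= f y)%E) -> (forall y, D y -> (f y <= g y)%E) ->
  (\int[mu]_(y in D) f y <= \int[mu]_(y in D) g y)%E.
Proof.
move=> f0 fg.
have g0 y : D y -> (0 <= g y)%E by move=> Dy; exact: le_trans (f0 _ Dy) (fg _ Dy).
rewrite (ge0_integralE mu f0) (ge0_integralE mu g0).
apply: ereal_sup_le => _ [h hf <-]; exists h => //= y.
apply: le_trans (hf y) _; rewrite /patch; case: ifP => // /[!inE] Dy.
exact: fg.
Qed.

Definition gk (b y : R) := y * expR (- (b * y ^+ 2)).

Lemma gk_ge0 b y : 0 <= y -> 0 <= gk b y.
Proof. by move=> y0; rewrite /gk mulr_ge0 // expR_ge0. Qed.

Lemma continuous_gk b : continuous (gk b).
Proof.
move=> z; apply: cvgM; first exact: cvg_id.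
apply: continuous_comp; last exact: continuous_expR.
apply: cvgN; apply: cvgM; first exact: cvg_cst.
by rewrite expr2; apply: cvgM; exact: cvg_id.
Qed.

Lemma measurable_gk b (D : set R) : measurable_fun D (gk b).
Proof. apply: measurable_funTS; exact: measurable_realfun.continuous_measurable_fun (@continuous_gk b). Qed.

Let F b := fun y : R => - (expR (- (b * y ^+ 2)) / (2 * b)).

Lemma cF b : continuous (F b).
Proof.
move=> z; apply: cvgN; apply: cvgMl.
apply: continuous_comp; last exact: continuous_expR.
apply: cvgN; apply: cvgM; first exact: cvg_cst.
by rewrite expr2; apply: cvgM; exact: cvg_id.
Qed.

Lemma dF (b y : R) : 0 < b -> is_derive y 1 (F b) (gk b y).
Proof.
move=> b0.
have h1 : is_derive y 1 (fun y => - (b * y ^+ 2)) (- (b * (2%:R * y))).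
  apply: is_derive_eq.
  by rewrite /GRing.scale /= !mulr1 -mulr2n mulr_natl.
have h2 : is_derive y 1 (expR \o (fun y => - (b * y ^+ 2))) (expR (- (b * y ^+ 2)) * - (b * (2%:R * y))).
  exact: is_derive1_comp.
have h3 : is_derive y 1 (fun y => (expR \o (fun y => - (b * y ^+ 2))) y * (2 * b)^-1) (expR (- (b * y ^+ 2)) * - (b * (2%:R * y)) * (2 * b)^-1).
  by apply: is_derive_eq; rewrite scaler0 add0r /GRing.scale /= mulrC.
rewrite /F /gk; apply: is_derive_eq.
by field; rewrite gt_eqF.
Qed.

Lemma int_gk b : 0 < b ->
  (\int[mu]_(y in `]0%R, +oo[) (gk b y)%:E = (2 * b)^-1%:E)%E.
Proof.
move=> b0.
rewrite integral_itv_obnd_cbnd; last by apply/measurable_EFinP; exact: measurable_gk.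
rewrite (@ge0_continuous_FTC2y _ _ (F b) _ 0).
- by rewrite /F expr0n /= mulr0 oppr0 expR0 div1r opprK add0e.
- by move=> y y0; apply: gk_ge0.
- by move=> y; apply: continuous_subspaceT; exact: continuous_gk.
- rewrite /F -oppr0; apply: cvgN; rewrite -(mul0r (2 * b)^-1); apply: cvgMl.
  have H : (fun y => b * y ^+ 2) @ +oo --> +oo.
    apply/cvgryPge => r; near=> y.
    have y1 : 1 <= y by near: y; apply: nbhs_pinfty_ge; rewrite num_real.
    have yr : r / b <= y by near: y; apply: nbhs_pinfty_ge; rewrite num_real.
    have yr' : r <= b * y by rewrite -ler_pdivrMl // mulrC.
    have : 0 <= b * y * (y - 1) by rewrite !mulr_ge0 //; lra.
    rewrite expr2; nra.
  exact: (cvg_comp _ _ H (@cvgr_expR R)).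
- by move=> y _; apply: ex_derive; exact: dF.
- by apply: cvg_at_right_filter; exact: cF.
- by move=> y _; rewrite derive1E; apply: derive_val; exact: dF.
Unshelve. all: end_near. Qed.
Lemma Gamma_inv (s : R) : 1 <= s -> 0 <= (Gamma s)^-1 <= expR 2.
Proof.
move=> s1.
set v := (\int[mu]_(u in `]0%R, +oo[) ((u `^ (s - 1)) * expR (- u))%:E)%E.
have lb : ((expR (-2))%:E <= v)%E.
  apply: (@le_trans _ _ (\int[mu]_(u in `]0%R, +oo[) ((expR (-2))%:E * (\1_`[1%R, 2%R] u)%:E))%E).
    rewrite ge0_integralZl_EFin //; last first.
      by apply/measurable_EFinP; apply: measurable_indic.
    rewrite integral_indic // setIidl; last first.
      by move=> u /=; rewrite !in_itv/= => /andP[u1 _]; apply/andP; split => //; lra.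
    set X := (X in (_ <= _ * X)%E).
    suff -> : X = 1%E by rewrite mule1.
    have := @lebesgue_measure_itv R `[1%R, 2%R].
    rewrite /= lte_fin ltr1n -EFinB => H; rewrite /X; apply: (eq_trans H); congr (_%:E); lra.
  apply: le_int_nm.
    by move=> u _; rewrite -EFinM lee_fin mulr_ge0 // ?expR_ge0.
  move=> u /=; rewrite in_itv /= andbT => u0.
  rewrite -EFinM lee_fin indicE; case: (boolP (u \in _)) => uA; last first.
    by rewrite mulr0 mulr_ge0 // ?expR_ge0 ?powR_ge0.
  move: uA; rewrite inE /= in_itv /= => /andP[u1 u2]; rewrite mulr1.
  rewrite -[expR (-2)]mul1r ler_pM // ?expR_ge0 //; last by rewrite ler_expR; lra.
  rewrite -[X in X <= _](powRr0 u) ler_powR //; lra.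
rewrite /Gamma -/v; move: lb; case: v => [r| |] //=; last by rewrite invr0 lexx expR_ge0.
rewrite lee_fin => r2.
have r0 : 0 < r by apply: lt_le_trans r2; rewrite expR_gt0.
rewrite invr_ge0 (ltW r0) /=.
rewrite -(ler_pM2r r0) mulVf ?gt_eqF //.
apply: le_trans (_ : expR 2 * expR (-2) <= _); last by rewrite ler_pM2l ?expR_gt0.
by rewrite -expRD subrr expR0.
Qed.
Lemma exp_psum (q : R) n : 0 <= q -> \sum_(0 <= k < n) q ^+ k / k`!%:R <= expR q.
Proof.
move=> q0.
have nd : nondecreasing_seq (series (exp_coeff q)).
  by apply: nondecreasing_series => k _ _; exact: exp_coeff_ge0.
exact: (nondecreasing_cvgn_le nd (is_cvg_series_exp_coeff q) n).
Qed.

Definition uterm (nu z : R) (k : nat) :=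
  (z / 2) `^ (2 * k%:R + nu) / ((k`!)%:R * Gamma (k%:R + nu + 1)).

Lemma utermE nu z k : 0 < z ->
  uterm nu z k = (z / 2) `^ nu * ((z / 2) ^+ 2 ^+ k / (k`!)%:R * (Gamma (k%:R + nu + 1))^-1).
Proof.
move=> z0; rewrite /uterm addrC powRD; last by apply/implyP => _; rewrite gt_eqF // divr_gt0.
rewrite invfM -!mulrA; congr (_ * _); congr (_ * _).
have w0 : 0 <= z / 2 by rewrite divr_ge0 // ltW.
rewrite [X in _ `^ X]mulrC powRrM powR_mulrn ?powR_ge0 // powR_mulrn // -!exprM; congr (_ ^+ _); exact: mulnC.
Qed.
Lemma term_bound (q g e : R) j : 0 <= q -> 0 <= g <= e ->
  q ^+ j.+1 / (j.+1)`!%:R * g <= e * q * (q ^+ j / j`!%:R).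
Proof.
move=> q0 /andP[g0 ge].
have h : q ^+ j.+1 / (j.+1)`!%:R <= q * (q ^+ j / j`!%:R).
  rewrite factS natrM invfM exprS -!mulrA; apply: ler_wpM2l => //.
  rewrite mulrCA mulrC ler_pdivrMr ?ltr0n // ler_peMr ?ler1n //.
  by rewrite mulr_ge0 ?invr_ge0 ?exprn_ge0.
rewrite mulrC -mulrA; apply: ler_pM => //.
by rewrite divr_ge0 // exprn_ge0.
Qed.

Lemma besselI_bounds (nu z : R) : 0 < nu -> 0 < z ->
  (z / 2) `^ nu * (Gamma (nu + 1))^-1 <= besselI nu z <=
  (z / 2) `^ nu * ((Gamma (nu + 1))^-1 +
                   expR 2 * ((z / 2) ^+ 2 * expR ((z / 2) ^+ 2))).
Proof.
move=> nu0 z0.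
set w := z / 2; set q := w ^+ 2.
have w0 : 0 <= w by rewrite divr_ge0 // ltW.
have q0 : 0 <= q by rewrite exprn_ge0.
have gb k : 0 <= (Gamma (k%:R + nu + 1))^-1 <= expR 2.
  by apply: Gamma_inv; have : (0:R) <= k%:R := ler0n _ _; lra.
have u0 k : 0 <= uterm nu z k.
  rewrite utermE // mulr_ge0 ?powR_ge0 // mulr_ge0 ?divr_ge0 ?exprn_ge0 //.
  by case/andP: (gb k).
have nd : nondecreasing_seq (series (uterm nu z)).
  by apply: nondecreasing_series => k _ _; exact: u0.
have uterm0 : uterm nu z 0 = w `^ nu * (Gamma (nu + 1))^-1.
  by rewrite utermE // expr0 fact0 divr1 mul1r add0r.
set M := w `^ nu * (_ + _).
have ub n : series (uterm nu z) n <= M.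
  suff : series (uterm nu z) n.+1 <= M by apply: le_trans; apply: nd; exact: leqnSn.
  rewrite /series /= big_nat_recl // uterm0 /M mulrDr lerD2l.
  apply: (@le_trans _ _ (\sum_(0 <= j < n) (w `^ nu * expR 2 * q) * (q ^+ j / (j`!)%:R))).
    apply: ler_sum => j _; rewrite utermE // -/w -/q.
    have -> : w `^ nu * expR 2 * q * (q ^+ j / j`!%:R) =
              w `^ nu * (expR 2 * q * (q ^+ j / j`!%:R)) by rewrite !mulrA.
    apply: ler_wpM2l; first exact: powR_ge0.
    exact: term_bound.
  rewrite -mulr_sumr [in leRHS]mulrA [in leRHS]mulrA.
  apply: ler_wpM2l; first by apply: mulr_ge0 => //; apply: mulr_ge0; [exact: powR_ge0 | exact: expR_ge0].
  exact: exp_psum.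
have cv : cvgn (series (uterm nu z)).
  by apply: nondecreasing_is_cvgn => //; exists M => _ [n _ <-]; exact: ub.
have -> : besselI nu z = limn (series (uterm nu z)) by [].
apply/andP; split.
  rewrite -uterm0; have := nondecreasing_cvgn_le nd cv 1.
  by rewrite /series /= big_nat1.
by apply: limr_le => //; apply: nearW => n; exact: ub.
Qed.
Lemma pow_id (nu x t y : R) : 0 < x -> 0 < t -> 0 < y ->
  (y^-1) `^ (2 * nu) * (y / x) `^ nu * (x * y / t / 2) `^ nu = ((2 * t)^-1) `^ nu.
Proof.
move=> x0 t0 y0.
rewrite powRrM powR_mulrn ?invr_ge0 ?ltW // -!powRM;
  try by rewrite ?mulr_ge0 ?divr_ge0 ?exprn_ge0 ?invr_ge0 ?ltW.
by congr (_ `^ _); field; rewrite !gt_eqF.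
Qed.

Lemma tail_pt (x t y : R) : 0 < t -> 2 * x ^+ 2 <= t ->
  expR (- ((2 * t)^-1 * y ^+ 2)) * ((x * y / t / 2) ^+ 2 * expR ((x * y / t / 2) ^+ 2))
  <= (2 * x ^+ 2 / t) * expR (- ((4 * t)^-1 * y ^+ 2)).
Proof.
move=> t0 xt.
set Y := y ^+ 2; have Y0 : 0 <= Y by rewrite /Y sqr_ge0.
set c := x ^+ 2 / (4 * t ^+ 2).
have qE : (x * y / t / 2) ^+ 2 = c * Y.
  by rewrite /c /Y; field; rewrite gt_eqF.
rewrite qE.
have c0 : 0 <= c by rewrite /c divr_ge0 ?sqr_ge0 // mulr_ge0 ?sqr_ge0.
set d := (8 * t)^-1.
have d0 : 0 < d by rewrite invr_gt0 mulr_gt0.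
have c8 : c * (8 * t) = 2 * x ^+ 2 / t by rewrite /c; field; rewrite gt_eqF.
have cd : c <= d.
  rewrite /d -(ler_pM2r (_ : 0 < 8 * t)) ?mulr_gt0 // c8 mulVf ?gt_eqF ?mulr_gt0 //.
  by rewrite ler_pdivrMr // mul1r.
have cYd : c * Y <= d * Y by rewrite ler_wpM2r.
have Ybd : Y <= (8 * t) * expR (d * Y).
  have := expR_ge1Dx (d * Y).
  have -> : 8 * t = d^-1 by rewrite /d invrK.
  move=> h; rewrite -(ler_pM2l d0) mulVKf ?gt_eqF //; lra.
have cYb : c * Y <= (2 * x ^+ 2 / t) * expR (d * Y).
  by rewrite -c8 -mulrA ler_wpM2l.
apply: (@le_trans _ _ (expR (- ((2 * t)^-1 * Y)) * ((2 * x ^+ 2 / t) * expR (d * Y) * expR (d * Y)))).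
  rewrite ler_wpM2l ?expR_ge0 //.
  apply: ler_pM; [exact: mulr_ge0 | exact: expR_ge0 | exact: cYb | by rewrite ler_expR].
have e1 : expR (- ((2 * t)^-1 * Y)) * (expR (d * Y) * expR (d * Y)) =
          expR (- ((4 * t)^-1 * Y)).
  by rewrite -!expRD /d; congr expR; field; rewrite gt_eqF.
rewrite -e1.
set A := expR (- ((2 * t)^-1 * Y)); set E := expR (d * Y); set B := 2 * x ^+ 2 / t.
have -> : A * (B * E * E) = B * (A * (E * E)) by ring.
by [].
Qed.
Lemma integrand_bounds (nu x t y : R) : 0 < nu -> 0 < x -> 0 < t -> 0 < y ->
  2 * x ^+ 2 <= t ->
  ((2 * t)^-1) `^ nu * (Gamma (nu + 1))^-1 * expR (- (x ^+ 2 / (2 * t))) / t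
     * gk (2 * t)^-1 y
  <= (y^-1) `^ (2 * nu) * bessel_density nu x t y <=
  ((2 * t)^-1) `^ nu * (Gamma (nu + 1))^-1 * expR (- (x ^+ 2 / (2 * t))) / t
     * gk (2 * t)^-1 y
  + ((2 * t)^-1) `^ nu * expR 2 * expR (- (x ^+ 2 / (2 * t))) / t * (2 * x ^+ 2 / t)
     * gk (4 * t)^-1 y.
Proof.
move=> nu0 x0 t0 y0 xt.
have z0 : 0 < x * y / t by rewrite !divr_gt0 ?mulr_gt0.
have /andP[bl bu] := @besselI_bounds nu (x * y / t) nu0 z0.
rewrite /bessel_density.
set I := besselI nu (x * y / t) in bl bu *.
set K := ((2 * t)^-1) `^ nu; set g0 := (Gamma (nu + 1))^-1.
set A := expR (- (x ^+ 2 / (2 * t))).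
set E := expR (- ((2 * t)^-1 * y ^+ 2)).
have hE : expR (- (x ^+ 2 + y ^+ 2) / (2 * t)) = A * E.
  by rewrite /A /E -expRD; congr expR; field; rewrite gt_eqF.
rewrite hE.
set P := (y^-1) `^ (2 * nu) * (y / x) `^ nu.
set W := (x * y / t / 2) `^ nu in bl bu.
set q := (x * y / t / 2) ^+ 2 in bu.
have KE : P * W = K by rewrite /P /W /K pow_id.
have key : (y^-1) `^ (2 * nu) * (y / t * (y / x) `^ nu * (A * E) * I) =
           P * (y / t * (A * E)) * I by rewrite /P; ring.
rewrite key.
have c0 : 0 <= P * (y / t * (A * E)).
  by rewrite /P !mulr_ge0 ?powR_ge0 ?expR_ge0 ?invr_ge0 // ltW.
apply/andP; split.
  rewrite [X in X <= _](_ : _ = P * (y / t * (A * E)) * (W * g0)); last first.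
    by rewrite -KE /gk -/E; field; rewrite gt_eqF.
  by rewrite ler_wpM2l.
apply: (@le_trans _ _ (P * (y / t * (A * E)) * (W * (g0 + expR 2 * (q * expR q))))).
  by rewrite ler_wpM2l.
rewrite [X in X <= _](_ : _ = K * g0 * A / t * gk (2 * t)^-1 y +
    (K * expR 2 * A / t * y) * (E * (q * expR q))); last first.
  by rewrite -KE /gk -/E; field; rewrite gt_eqF.
rewrite lerD2l.
rewrite [X in _ <= X](_ : _ = (K * expR 2 * A / t * y) *
    ((2 * x ^+ 2 / t) * expR (- ((4 * t)^-1 * y ^+ 2)))); last first.
  by rewrite /gk; field; rewrite gt_eqF.
apply: ler_wpM2l; last exact: tail_pt.
by rewrite !mulr_ge0 ?powR_ge0 ?expR_ge0 ?invr_ge0 // ltW.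
Qed.
Lemma tK (nu t : R) : 0 < t -> t `^ nu * ((2 * t)^-1) `^ nu = (2 `^ nu)^-1.
Proof.
move=> t0.
rewrite -powRM ?invr_ge0 ?mulr_ge0 ?ltW //.
have -> : t * (2 * t)^-1 = 2^-1 by field; rewrite gt_eqF.
have h : 2 `^ nu * (2^-1) `^ nu = 1.
  by rewrite -powRM ?invr_ge0 // mulfV // powR1.
have n0 : 2 `^ nu != 0 :> R by rewrite gt_eqF // powR_gt0.
by rewrite -[LHS](mulKf n0) h mulr1.
Qed.

Lemma measurable_cgk (c b : R) (D : set R) : measurable_fun D (fun y => (c * gk b y)%:E).
Proof.
apply/measurable_EFinP; apply: measurable_funTS.
apply: measurable_realfun.continuous_measurable_fun => z.
by apply: cvgM; [exact: cvg_cst | exact: continuous_gk].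
Qed.

Definition c1f (nu x t : R) := ((2 * t)^-1) `^ nu * (Gamma (nu + 1))^-1 * expR (- (x ^+ 2 / (2 * t))) / t.
Definition c2f (nu x t : R) := ((2 * t)^-1) `^ nu * expR 2 * expR (- (x ^+ 2 / (2 * t))) / t * (2 * x ^+ 2 / t).

Lemma expect_bounds (nu x t : R) : 0 < nu -> 0 < x -> 0 < t -> 2 * x ^+ 2 <= t ->
  ((c1f nu x t * t)%:E <= bessel_expect nu x t (fun y => ((y ^-1) `^ (2 * nu))%R) <=
   (c1f nu x t * t + c2f nu x t * (2 * t))%:E)%E.
Proof.
move=> nu0 x0 t0 xt; set c1 := c1f nu x t; set c2 := c2f nu x t.
have hg : 1 <= nu + 1 by lra.
have /andP[g0 _] := @Gamma_inv (nu + 1) hg.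
have c10 : 0 <= c1.
  rewrite /c1 /c1f; apply: mulr_ge0; last by rewrite invr_ge0 ltW.
  by rewrite mulr_ge0 ?expR_ge0 // mulr_ge0 ?powR_ge0.
have c20 : 0 <= c2.
  by rewrite /c2 /c2f !mulr_ge0 ?powR_ge0 ?expR_ge0 ?invr_ge0 ?sqr_ge0 ?ltW.
have D (y : R) : `]0%R, +oo[%classic y -> 0 < y by rewrite /= in_itv /= andbT.
have bd y (Dy : `]0%R, +oo[%classic y) := @integrand_bounds nu x t y nu0 x0 t0 (D y Dy) xt.
have mg (b : R) : measurable_fun (`]0%R, +oo[%classic : set R) (EFin \o gk b).
  by apply/measurable_EFinP; exact: measurable_gk.
have i1 : (\int[mu]_(y in `]0%R, +oo[) (c1 * gk (2 * t)^-1 y)%:E = (c1 * t)%:E)%E.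
  under eq_integral do rewrite EFinM.
  rewrite ge0_integralZl_EFin //; [|by move=> y /(D y) y0; rewrite lee_fin gk_ge0 // ltW|exact: mg].
  rewrite int_gk ?invr_gt0 ?mulr_gt0 // -EFinM; congr (_ * _)%:E.
  by field; rewrite gt_eqF.
have i2 : (\int[mu]_(y in `]0%R, +oo[) (c2 * gk (4 * t)^-1 y)%:E = (c2 * (2 * t))%:E)%E.
  under eq_integral do rewrite EFinM.
  rewrite ge0_integralZl_EFin //; [|by move=> y /(D y) y0; rewrite lee_fin gk_ge0 // ltW|exact: mg].
  rewrite int_gk ?invr_gt0 ?mulr_gt0 // -EFinM; congr (_ * _)%:E.
  by field; rewrite gt_eqF.
apply/andP; split.
  rewrite -i1 /bessel_expect; apply: le_int_nm.
    by move=> y /(D y) y0; rewrite lee_fin mulr_ge0 // gk_ge0 // ltW.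
  by move=> y Dy; rewrite lee_fin; case/andP: (bd y Dy).
rewrite EFinD -i1 -i2 -ge0_integralD //;
  try (by move=> y /(D y) y0; rewrite lee_fin mulr_ge0 // gk_ge0 // ltW);
  try exact: measurable_cgk.
rewrite /bessel_expect; apply: le_int_nm.
  move=> y Dy; rewrite lee_fin; case/andP: (bd y Dy) => h _; apply: le_trans h.
  by rewrite mulr_ge0 // gk_ge0 // ltW // D.
by move=> y Dy; rewrite -EFinD lee_fin; case/andP: (bd y Dy).
Qed.
End H.

Theorem lemma2p1 (R : realType) (nu : R) (hnu : 0 < nu) (x : R) (hx : 0 < x) :
  ((fun t : R => ((t `^ nu)%R%:E
       * bessel_expect nu x t (fun y => ((y ^-1) `^ (2 * nu))%R))%E)
     @ +oo --> ((2 `^ nu * Gamma (nu + 1))^-1)%:E)%classic.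
Proof.
set g0 := (Gamma (nu + 1))^-1.
pose A := fun t : R => expR (- (x ^+ 2 / (2 * t))).
pose L := fun t : R => (2 `^ nu)^-1 * g0 * A t.
pose U := fun t : R => L t + (2 `^ nu)^-1 * expR 2 * A t * (4 * x ^+ 2 * t^-1).
have hinv : (fun t : R => t^-1) @ +oo --> 0.
  apply/gtr0_cvgV0; last exact: cvg_id.
  by near=> t; near: t; apply: nbhs_pinfty_gt; rewrite num_real.
have hA : A @ +oo --> (1 : R).
  rewrite -expR0.
  have h : (fun t : R => - (x ^+ 2 / (2 * t))) @ +oo --> 0.
    have -> : (fun t : R => - (x ^+ 2 / (2 * t))) = (fun t => - (x ^+ 2 / 2 * t^-1)).
      by apply/funext => t; rewrite invfM mulrA.
    rewrite -oppr0; apply: cvgN; rewrite -(mulr0 (x ^+ 2 / 2)).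
    by apply: cvgM; [exact: cvg_cst | exact: hinv].
  exact: (cvg_comp _ _ h (@continuous_expR R 0)).
have hL : L @ +oo --> (2 `^ nu)^-1 * g0.
  rewrite -[X in _ --> X]mulr1; apply: cvgM; [exact: cvg_cst | exact: hA].
have hU : U @ +oo --> (2 `^ nu)^-1 * g0.
  rewrite -[X in _ --> X]addr0; apply: cvgD; first exact: hL.
  rewrite -(mulr0 ((2 `^ nu)^-1 * expR 2 * 1)).
  apply: cvgM; first by apply: cvgM; [exact: cvg_cst | exact: hA].
  rewrite -(mulr0 (4 * x ^+ 2)).
  by apply: cvgM; [exact: cvg_cst | exact: hinv].
rewrite invfM.
apply: (@squeeze_cvge _ _ _ _ (fun t => (L t)%:E) _ (fun t => (U t)%:E)).
- near=> t.
  have t0 : 0 < t by near: t; apply: nbhs_pinfty_gt; rewrite num_real.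
  have xt : 2 * x ^+ 2 <= t by near: t; apply: nbhs_pinfty_ge; rewrite num_real.
  have /andP[lo hi] := @expect_bounds R nu x t hnu hx t0 xt.
  have eL : t `^ nu * (c1f R nu x t * t) = L t.
    by rewrite /L /A /c1f -/g0 -(@tK R nu t t0); field; rewrite gt_eqF.
  have eU : t `^ nu * (c1f R nu x t * t + c2f R nu x t * (2 * t)) = U t.
    by rewrite /U /L /A /c1f /c2f -/g0 -(@tK R nu t t0); field; rewrite gt_eqF.
  apply/andP; split.
    by rewrite -eL EFinM; apply: lee_wpmul2l => //; rewrite lee_fin powR_ge0.
  by rewrite -eU EFinM; apply: lee_wpmul2l => //; rewrite lee_fin powR_ge0.
- by apply: cvg_EFin; [exact: nearW | exact: hL].
- by apply: cvg_EFin; [exact: nearW | exact: hU].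
Unshelve. all: end_near. Qed.
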